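(* Let $p$ be an odd prime, let $h_1,h_2$ be relatively prime positive integers, both different from $1$, and set $h=h_1+h_2$. Let $\mathcal{D}:\overline{\mathfrak m}^2\to\overline{\mathfrak m}^2$ be given by $\mathcal{D}(x_1,x_2)=(px_1+x_2^{p^{h_1}},\ px_2+x_1^{p^{h_2}})$. Let $n\ge1$ and let $(\xi,\eta)$ be a non-trivial $p^n$-torsion point of $\mathcal D$, i.e. $\mathcal{D}^{\circ n}(\xi,\eta)=(0,0)$ but $\mathcal{D}^{\circ(n-1)}(\xi,\eta)\ne(0,0)$. Then: if $n=2m$ is even, $v(\xi)=\dfrac{p^{h_2}+1}{p^{hm-h_1}(p^h-1)}$ and $v(\eta)=\dfrac{p^{h_1}+1}{p^{hm-h_2}(p^h-1)}$; if $n=2m+1$ is odd, $v(\xi)=\dfrac{p^{h_1}+1}{p^{hm}(p^h-1)}$ and $v(\eta)=\dfrac{p^{h_2}+1}{p^{hm}(p^h-1)}$.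
   Context: $v$ denotes the $p$-adic valuation on $\overline{\mathbb{Q}}_p$ normalized by $v(p)=1$, and $\overline{\mathfrak m}$ the maximal ideal of the ring of integers of $\overline{\mathbb{Q}}_p$; $\mathcal D^{\circ k}$ is the $k$-fold iterate ($\mathcal{D}^{\circ 0}=\mathrm{Id}$). The map $\mathcal D$ is a simple approximation of the multiplication-by-$p$ endomorphism of the 2-dimensional Lubin–Tate formal group associated with $(h_1,h_2)$. *)

(* Defs.v *)
From mathcomp Require Import all_boot all_order all_algebra.
Set Implicit Arguments. Unset Strict Implicit. Unset Printing Implicit Defensive.
Import Order.TTheory GRing.Theory Num.Theory.
Local Open Scope ring_scope.

(* A (rank-one, rational-valued) non-archimedean valuation v on a field K,
   normalized by v(p) = 1.  v is only meaningful on nonzero elements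
   (v 0 plays the role of +oo and its value is irrelevant). *)
Definition is_pvaluation (K : fieldType) (p : nat) (v : K -> rat) : Prop :=
  [/\ forall x y : K, x != 0 -> y != 0 -> v (x * y) = v x + v y,
      forall x y : K, x != 0 -> y != 0 -> x + y != 0 ->
        Num.min (v x) (v y) <= v (x + y)
    & v (p%:R) = 1 ].

Definition in_mbar (K : fieldType) (v : K -> rat) (x : K) : Prop :=
  x = 0 \/ 0 < v x.

Definition Dmap (K : fieldType) (p h1 h2 : nat) (z : K * K) : K * K :=
  (p%:R * z.1 + z.2 ^+ (p ^ h1), p%:R * z.2 + z.1 ^+ (p ^ h2)).

(* Main.v *)
Require Import Defs.
From mathcomp Require Import all_boot all_order all_algebra.
From mathcomp Require Import ring lra zify.
Set Implicit Arguments. Unset Strict Implicit.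
Import Order.TTheory GRing.Theory Num.Theory.
Local Open Scope ring_scope.

Lemma pv_1 (K : fieldType) (p : nat) (v : K -> rat) :
  is_pvaluation p v -> v 1 = 0.
Proof.
case=> hm _ _; have := hm 1 1 (oner_neq0 K) (oner_neq0 K).
rewrite mulr1 => h; lra.
Qed.

Lemma pv_N (K : fieldType) (p : nat) (v : K -> rat) (x : K) :
  is_pvaluation p v -> x != 0 -> v (- x) = v x.
Proof.
move=> hv hx; have h1 := pv_1 hv; case: hv => hm _ _.
have n1 : (-1 : K) != 0 by rewrite oppr_eq0 oner_neq0.
have := hm _ _ n1 n1; rewrite mulrNN mulr1 h1 => e.
have e1 : v (-1) = 0 by lra.
by rewrite -mulN1r hm // e1 add0r.
Qed.

Lemma pv_X (K : fieldType) (p : nat) (v : K -> rat) (x : K) (k : nat) :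
  is_pvaluation p v -> x != 0 -> v (x ^+ k) = k%:R * v x.
Proof.
move=> hv hx; have h1 := pv_1 hv; case: hv => hm _ _.
elim: k => [|k IH]; first by rewrite expr0 h1 mul0r.
rewrite exprS hm ?expf_neq0 // IH -natr1; ring.
Qed.

Lemma pv_dom (K : fieldType) (p : nat) (v : K -> rat) (s u w : K) :
  is_pvaluation p v -> s = u + w -> s != 0 ->
  (u = 0 \/ (u != 0 /\ v s < v u)) -> w != 0 /\ v w = v s.
Proof.
move=> hv es hs [u0|[hu lt]].
  by move: es hs; rewrite u0 add0r => ->.
have hw : w != 0.
  apply/negP=> /eqP w0; move: es lt; rewrite w0 addr0 => ->; by rewrite ltxx.
split=> //.
have hN := pv_N hv hu.
case: hv => hm hu2 _.
have e2 : w = s + (- u) by rewrite es; ring.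
have hNu : - u != 0 by rewrite oppr_eq0.
have A := hu2 _ _ hs hNu; rewrite -e2 hN in A; have {}A := A hw.
have B := hu2 _ _ hu hw; rewrite -es in B; have {}B := B hs.
move: A B; rewrite !ge_min.
move=> A B. case/ssrbool.orP: A => A; case/ssrbool.orP: B => B; lra.
Qed.

Lemma mbar_add (K : fieldType) (p : nat) (v : K -> rat) (x y : K) :
  is_pvaluation p v -> in_mbar v x -> in_mbar v y -> in_mbar v (x + y).
Proof.
move=> [_ hu _] hx hy.
case: (eqVneq x 0) => [->|hx0]; first by rewrite add0r.
case: (eqVneq y 0) => [->|hy0]; first by rewrite addr0.
case: (eqVneq (x + y) 0) => [->|hs]; first by left.
right; case: hx => [/eqP|hx]; first by rewrite (negbTE hx0).
case: hy => [/eqP|hy]; first by rewrite (negbTE hy0).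
have := hu _ _ hx0 hy0 hs; rewrite ge_min => /ssrbool.orP[]; lra.
Qed.

Lemma mbar_mul (K : fieldType) (p : nat) (v : K -> rat) (x y : K) :
  is_pvaluation p v -> in_mbar v x -> in_mbar v y -> in_mbar v (x * y).
Proof.
move=> [hm _ _] hx hy.
case: (eqVneq x 0) => [->|hx0]; first by rewrite mul0r; left.
case: (eqVneq y 0) => [->|hy0]; first by rewrite mulr0; left.
right; case: hx => [/eqP|hx]; first by rewrite (negbTE hx0).
case: hy => [/eqP|hy]; first by rewrite (negbTE hy0).
rewrite hm //; lra.
Qed.

Lemma mbar_X (K : fieldType) (p : nat) (v : K -> rat) (x : K) (k : nat) :
  is_pvaluation p v -> in_mbar v x -> (0 < k)%N -> in_mbar v (x ^+ k).
Proof.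
move=> hv hx; elim: k => [//|k IH] _.
case: k IH => [|k] IH; first by rewrite expr1.
by rewrite exprS; apply: (mbar_mul hv) => //; apply: IH.
Qed.

Lemma mbar_p (K : fieldType) (p : nat) (v : K -> rat) :
  is_pvaluation p v -> in_mbar v (p%:R : K).
Proof. by move=> [_ _ h]; right; rewrite h. Qed.

Lemma mbar_D (K : fieldType) (p h1 h2 : nat) (v : K -> rat) (z : K * K) :
  is_pvaluation p v -> (0 < p)%N -> in_mbar v z.1 -> in_mbar v z.2 ->
  in_mbar v (Dmap p h1 h2 z).1 /\ in_mbar v (Dmap p h1 h2 z).2.
Proof.
move=> hv p0 h1' h2'; rewrite /Dmap /=.
have hp := mbar_p hv.
split; apply: (mbar_add hv); try apply: (mbar_mul hv) => //;
  apply: (mbar_X hv) => //; by rewrite expn_gt0 p0.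
Qed.

Lemma mbar_iter (K : fieldType) (p h1 h2 : nat) (v : K -> rat) (z : K * K) k :
  is_pvaluation p v -> (0 < p)%N -> in_mbar v z.1 -> in_mbar v z.2 ->
  in_mbar v (iter k (Dmap p h1 h2) z).1 /\ in_mbar v (iter k (Dmap p h1 h2) z).2.
Proof.
move=> hv p0 h1' h2'; elim: k => [//|k [IH1 IH2]] /=.
exact: mbar_D.
Qed.

Lemma pv_p (K : fieldType) (p : nat) (v : K -> rat) (x : K) :
  is_pvaluation p v -> (p%:R : K) != 0 -> x != 0 -> v (p%:R * x) = 1 + v x.
Proof. by move=> [hm _ hp] p0 x0; rewrite hm // hp. Qed.

Lemma step (K : fieldType) (p h1 h2 : nat) (v : K -> rat) (z : K * K) :
  is_pvaluation p v -> (p%:R : K) != 0 -> (0 < p)%N ->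
  in_mbar v z.1 -> in_mbar v z.2 ->
  let a := (Dmap p h1 h2 z).1 in let b := (Dmap p h1 h2 z).2 in
  a != 0 -> b != 0 -> v a < 1 -> v b < 1 ->
  z.1 != 0 /\ z.2 != 0 /\ v z.1 = v b / (p ^ h2)%N%:R /\ v z.2 = v a / (p ^ h1)%N%:R.
Proof.
case: z => x y hv pK p0 hx hy a b ha hb va vb; rewrite /= in hx hy.
have qpos k : (0 < p ^ k)%N by rewrite expn_gt0 p0.
have gen (s u w : K) (k : nat) : s = p%:R * u + w ^+ (p ^ k) -> s != 0 -> v s < 1 ->
    in_mbar v u -> w != 0 /\ v w = v s / (p ^ k)%N%:R.
  move=> es hs vs hu.
  have H : p%:R * u = 0 \/ (p%:R * u != 0 /\ v s < v (p%:R * u)).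
    case: (eqVneq u 0) => [->|hu0]; first by left; rewrite mulr0.
    right; split; first by rewrite mulf_neq0.
    rewrite pv_p //; case: hu => [/eqP|hu]; first by rewrite (negbTE hu0).
    lra.
  have [hw ev] := pv_dom hv es hs H.
  have hw0 : w != 0 by apply: contraNneq hw => ->; rewrite expr0n /= eqn0Ngt qpos.
  split=> //; rewrite -ev (pv_X _ hv) // mulrAC divff ?mul1r // pnatr_eq0 -lt0n qpos //.
have [hy0 ey] := gen a x y h1 erefl ha va hx.
have [hx0 ex] := gen b y x h2 erefl hb vb hy.
by do !split.
Qed.

Lemma base (K : fieldType) (p h1 h2 : nat) (v : K -> rat) (z : K * K) :
  is_pvaluation p v -> (p%:R : K) != 0 -> (1 < p)%N -> (0 < h1)%N -> (0 < h2)%N ->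
  Dmap p h1 h2 z = (0, 0) -> z != (0, 0) ->
  let q1 : rat := (p ^ h1)%N%:R in let q2 : rat := (p ^ h2)%N%:R in
  z.1 != 0 /\ z.2 != 0 /\ v z.1 = (q1 + 1) / (q1 * q2 - 1)
   /\ v z.2 = (q2 + 1) / (q1 * q2 - 1).
Proof.
case: z => a b hv pK p1 h1p h2p [e1 e2] hz q1 q2 /=.
have qpos k : (0 < p ^ k)%N by rewrite expn_gt0 ltnW.
have e1' : p%:R * a = - b ^+ (p ^ h1) by apply/eqP; rewrite -subr_eq0 opprK e1.
have e2' : p%:R * b = - a ^+ (p ^ h2) by apply/eqP; rewrite -subr_eq0 opprK e2.
have ha : a != 0.
  apply: contraNneq hz => a0; move: e1'; rewrite a0 mulr0 => /eqP.
  rewrite eq_sym oppr_eq0 expf_eq0 qpos /= => /eqP ->; by [].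
have hb : b != 0.
  apply: contraNneq hz => b0; move: e2'; rewrite b0 mulr0 => /eqP.
  rewrite eq_sym oppr_eq0 expf_eq0 qpos /= => /eqP a0; by rewrite a0.
have E1 : 1 + v a = q1 * v b.
  by rewrite -(pv_p hv) // e1' (pv_N hv) ?expf_neq0 // (pv_X _ hv).
have E2 : 1 + v b = q2 * v a.
  by rewrite -(pv_p hv) // e2' (pv_N hv) ?expf_neq0 // (pv_X _ hv).
have q1g : 1 < q1 by rewrite /q1 ltr1n -{1}(expn0 p) ltn_exp2l.
have q2g : 1 < q2 by rewrite /q2 ltr1n -{1}(expn0 p) ltn_exp2l.
have nz : q1 * q2 - 1 != 0 by rewrite subr_eq0; apply/negP => /eqP e; clear -q1g q2g e; nra.
have Ea : v a * (q1 * q2 - 1) = q1 + 1.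
  have -> : v a * (q1 * q2 - 1) = q1 * (q2 * v a - 1 - v b) + (q1 * v b - 1 - v a) + q1 + 1 by ring.
  have -> : q2 * v a - 1 - v b = 0 by lra.
  have -> : q1 * v b - 1 - v a = 0 by lra.
  ring.
have Eb : v b * (q1 * q2 - 1) = q2 + 1.
  have -> : v b * (q1 * q2 - 1) = q2 * (q1 * v b - 1 - v a) + (q2 * v a - 1 - v b) + q2 + 1 by ring.
  have -> : q2 * v a - 1 - v b = 0 by lra.
  have -> : q1 * v b - 1 - v a = 0 by lra.
  ring.
by do !split => //; [rewrite -Ea | rewrite -Eb]; rewrite mulfK.
Qed.

Fixpoint Fv (q1 q2 A B : rat) (j : nat) : rat * rat :=
  match j with
  | 0 => (A, B)
  | j'.+1 => ((Fv q1 q2 A B j').2 / q2, (Fv q1 q2 A B j').1 / q1)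
  end.

Lemma div_bd (c q : rat) : 0 < c < 1 -> 1 <= q -> 0 < c / q < 1.
Proof.
move=> /andP[c0 c1] q1; have q0 : 0 < q by lra.
by rewrite divr_gt0 //= ltr_pdivrMr // mul1r; lra.
Qed.

Lemma Fv_bd q1 q2 A B j : 1 <= q1 -> 1 <= q2 -> 0 < A < 1 -> 0 < B < 1 ->
  0 < (Fv q1 q2 A B j).1 < 1 /\ 0 < (Fv q1 q2 A B j).2 < 1.
Proof.
move=> h1 h2 hA hB; elim: j => [//|j [I1 I2]] /=.
by split; apply: div_bd.
Qed.

Lemma Fv_even q1 q2 A B m : q1 != 0 -> q2 != 0 ->
  Fv q1 q2 A B (2 * m) = (A / (q1 * q2) ^+ m, B / (q1 * q2) ^+ m).
Proof.
move=> n1 n2; elim: m => [|m IH]; first by rewrite /= !expr0 !divr1.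
rewrite mulnS /= IH /= exprS; congr (_, _); field.
all: by rewrite ?expf_neq0 ?mulf_neq0 ?n1 ?n2.
Qed.

Lemma Fv_odd q1 q2 A B m : q1 != 0 -> q2 != 0 ->
  Fv q1 q2 A B (2 * m).+1 = (B / (q2 * (q1 * q2) ^+ m), A / (q1 * (q1 * q2) ^+ m)).
Proof.
move=> n1 n2; rewrite /= Fv_even //=; congr (_, _); field.
all: by rewrite ?expf_neq0 ?mulf_neq0 ?n1 ?n2.
Qed.
Theorem theorem5p5
  (K : closedFieldType) (p h1 h2 : nat) (v : K -> rat)
  (charK0 : [pchar K] =i pred0)
  (hv : is_pvaluation p v)
  (hp : prime p) (hpodd : odd p)
  (hh1 : (1 < h1)%N) (hh2 : (1 < h2)%N) (hcop : coprime h1 h2)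
  (n : nat) (hn : (1 <= n)%N) (xi eta : K)
  (hxi : in_mbar v xi) (heta : in_mbar v eta)
  (htors : iter n (Dmap p h1 h2) (xi, eta) = (0, 0))
  (hnontriv : iter n.-1 (Dmap p h1 h2) (xi, eta) != (0, 0)) :
  let h := (h1 + h2)%N in
  xi != 0 /\ eta != 0 /\
  (forall m : nat, n = (2 * m)%N ->
     v xi = ((p ^ h2).+1)%:R / ((p ^ (h * m - h1) * (p ^ h).-1)%N)%:R
  /\ v eta = ((p ^ h1).+1)%:R / ((p ^ (h * m - h2) * (p ^ h).-1)%N)%:R) /\
  (forall m : nat, n = (2 * m).+1 ->
     v xi = ((p ^ h1).+1)%:R / ((p ^ (h * m) * (p ^ h).-1)%N)%:R
  /\ v eta = ((p ^ h2).+1)%:R / ((p ^ (h * m) * (p ^ h).-1)%N)%:R).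
Proof.
move=> h.
have p1 : (1 < p)%N := prime_gt1 hp.
have p0 : (0 < p)%N by apply: ltnW.
have p3 : (3 <= p)%N.
  clear -p1 hpodd; case: p p1 hpodd => [|[|[|k]]] //.
have pK : (p%:R : K) != 0.
  by move/pcharf0P: charK0 => ->; rewrite -lt0n.
have h1p : (0 < h1)%N by apply: ltnW.
have h2p : (0 < h2)%N by apply: ltnW.
set q1 : rat := (p ^ h1)%N%:R.
set q2 : rat := (p ^ h2)%N%:R.
have q3 k : (0 < k)%N -> (3 <= p ^ k)%N.
  move=> k0; apply: leq_trans p3 _; rewrite -{1}(expn1 p) leq_exp2l //.
have q1g : 3 <= q1 by rewrite /q1 (ler_nat _ 3) q3.
have q2g : 3 <= q2 by rewrite /q2 (ler_nat _ 3) q3.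
set A := (q1 + 1) / (q1 * q2 - 1).
set B := (q2 + 1) / (q1 * q2 - 1).
have Q0 : 0 < q1 * q2 - 1 by nra.
have hA : 0 < A < 1.
  by rewrite divr_gt0 /= ?ltr_pdivrMr ?mul1r //; nra.
have hB : 0 < B < 1.
  by rewrite divr_gt0 /= ?ltr_pdivrMr ?mul1r //; nra.
have main j : (j < n)%N ->
    let z := iter (n.-1 - j) (Dmap p h1 h2) (xi, eta) in
    z.1 != 0 /\ z.2 != 0 /\ v z.1 = (Fv q1 q2 A B j).1 /\ v z.2 = (Fv q1 q2 A B j).2.
  elim: j => [_|j IH hj] /=.
    rewrite subn0; apply: (base hv pK p1 h1p h2p _ hnontriv).
    by rewrite -iterS prednK.
  have e : (n.-1 - j = (n.-1 - j.+1).+1)%N by lia.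
  have [I1 [I2 [I3 I4]]] := IH (ltnW hj).
  move: I1 I2 I3 I4; rewrite e iterS.
  have [m1 m2] := mbar_iter h1 h2 (z := (xi, eta)) (n.-1 - j.+1) hv p0 hxi heta.
  set z := iter _ _ _ => I1 I2 I3 I4.
  have q1e : 1 <= q1 by lra.
  have q2e : 1 <= q2 by lra.
  have [Fb1 Fb2] := Fv_bd j q1e q2e hA hB.
  move: Fb1 Fb2 => /andP[_ F1] /andP[_ F2].
  have := step hv pK p0 m1 m2 I1 I2; rewrite I3 I4 => /(_ F1 F2) [-> [-> [-> ->]]].
  by [].
have [X1 [X2 [X3 X4]]] := main n.-1 ltac:(by rewrite prednK).
rewrite subnn /= in X1 X2 X3 X4.
have q1n : q1 != 0 by apply: lt0r_neq0; apply: lt_le_trans q1g.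
have q2n : q2 != 0 by apply: lt0r_neq0; apply: lt_le_trans q2g.
have Qm1 : ((p ^ h).-1)%N%:R = q1 * q2 - 1 :> rat.
  by rewrite -subn1 natrB ?expn_gt0 ?p0 // /h expnD natrM.
have QX m : (p ^ (h * m))%N%:R = (q1 * q2) ^+ m :> rat.
  by rewrite expnM natrX /h expnD natrM.
have natS k : (k.+1)%:R = k%:R + 1 :> rat by rewrite -addn1 natrD.
have Qn0 : q1 * q2 - 1 != 0 by rewrite gt_eqF.
split; first done; split; first done; split.
  move=> m hm; case: m hm => [|m] hm; first by rewrite hm in hn.
  have e1 : n.-1 = (2 * m).+1 by rewrite hm mulnS.
  rewrite e1 Fv_odd // /= in X3 X4; rewrite X3 X4.
  have -> : (h * m.+1 - h1 = h2 + h * m)%N by rewrite mulnS {1}/h -addnA addKn.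
  have -> : (h * m.+1 - h2 = h1 + h * m)%N by rewrite mulnS {1}/h (addnC h1 h2) -addnA addKn.
  rewrite !natrM Qm1 !expnD !natrM QX !natS.
  rewrite /A /B; split; field; by rewrite ?expf_neq0 ?mulf_neq0 ?q1n ?q2n ?Qn0.
move=> m hm.
have e1 : n.-1 = (2 * m)%N by rewrite hm.
rewrite e1 Fv_even // /= in X3 X4; rewrite X3 X4.
rewrite !natrM Qm1 QX !natS.
rewrite /A /B; split; field; by rewrite ?expf_neq0 ?mulf_neq0 ?q1n ?q2n ?Qn0.
Qed.
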